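(* Let $G$ be a finite group and $t$ a positive integer. Then $$e(G)\le t+\mu^*(G,t)+\sum_{p\in\pi(G)}\mu_p(G,t).$$
   Context: $e(G)$ is the expected number of uniformly random elements of $G$, drawn independently with replacement, needed until they generate $G$; equivalently $e(G)=\sum_{n\ge0}(1-P_G(n))$ with $P_G(n)$ the probability that $n$ random elements generate $G$. $\pi(G)$ is the set of primes dividing $|G|$. A maximal subgroup $M$ of $G$ is of type A if the socle of $G/\mathrm{core}_G(M)$ is abelian and of type B otherwise; $m_n^A(G)$ (resp. $m_n^B(G)$) is the number of maximal subgroups of $G$ of type A (resp. B) of index $n$. Define $\mu^*(G,t)=\sum_{k\ge t}\sum_{n\ge 5} m_n^B(G)/n^k$ and, for a prime $p$, $\mu_p(G,t)=\sum_{k\ge t}\sum_{n\ge1} m^A_{p^n}(G)/p^{nk}$. *)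

(* Defs.v *)
From HB Require Import structures.
From mathcomp Require Import all_boot all_fingroup all_solvable.
From Stdlib Require Import Reals.
Set Implicit Arguments.
Unset Strict Implicit.
Unset Printing Implicit Defensive.

Local Open Scope group_scope.

Definition socle (gT : finGroupType) (H : {set gT}) : {set gT} :=
  <<\bigcup_(M : {group gT} | (M \subset H) && minnormal M H) M>>.

Definition typeA (gT : finGroupType) (G M : {group gT}) : bool :=
  abelian (socle (G / gcore M G)).

Definition mA (gT : finGroupType) (G : {group gT}) (n : nat) : nat :=
  #|[set M : {group gT} | [&& maximal M G, typeA G M & #|G : M| == n]]|.
Definition mB (gT : finGroupType) (G : {group gT}) (n : nat) : nat :=
  #|[set M : {group gT} | [&& maximal M G, ~~ typeA G M & #|G : M| == n]]|.

Definition ngen (gT : finGroupType) (G : {group gT}) (n : nat) : nat :=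
  #|[set x : n.-tuple gT | all (fun y => y \in G) x &&
                            (<<[set y | y \in x]>> == G)]|.

Local Open Scope R_scope.

Definition PG (gT : finGroupType) (G : {group gT}) (n : nat) : R :=
  INR (ngen G n) / INR (#|G| ^ n)%nat.

(* n-th term of the series e(G) = sum_{n >= 0} (1 - P_G(n)). *)
Definition e_term (gT : finGroupType) (G : {group gT}) (n : nat) : R :=
  1 - PG G n.

(* i-th term (k = t + i) of mu^*(G,t) = sum_{k>=t} sum_{n>=5} m_n^B(G)/n^k;
   m_n^B(G) = 0 for n > |G|, so the inner sum is over 5 <= n <= |G|. *)
Definition muStar_term (gT : finGroupType) (G : {group gT}) (t i : nat) : R :=
  \big[Rplus/0]_(5 <= n < #|G|.+1) (INR (mB G n) / (INR n) ^ (t + i)).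

(* i-th term (k = t + i) of mu_p(G,t) = sum_{k>=t} sum_{n>=1} m^A_{p^n}(G)/p^{nk};
   m^A_{p^n}(G) = 0 once p^n > |G|, in particular for n > |G|. *)
Definition mup_term (gT : finGroupType) (G : {group gT}) (p t i : nat) : R :=
  \big[Rplus/0]_(1 <= n < #|G|.+1)
     (INR (mA G (p ^ n)%nat) / (INR p) ^ (n * (t + i))).

(* Main.v *)
Require Import Defs.
From HB Require Import structures.
From mathcomp Require Import all_boot all_fingroup all_solvable.
From mathcomp Require Import integral_char.
From Stdlib Require Import Reals Lra.
Set Implicit Arguments. Unset Strict Implicit. Unset Printing Implicit Defensive.

Section GroupPart.
Local Open Scope group_scope.
Lemma socle_abelian (gT : finGroupType) (H : {group gT}) :
  (forall N : {group gT}, N \subset H -> minnormal N H -> abelian N) ->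
  abelian (socle H).
Proof.
move=> hab; rewrite /socle abelian_gen /abelian.
apply/bigcupsP => N1 /andP[sN1 mN1]; rewrite centsC.
apply/bigcupsP => N2 /andP[sN2 mN2]; rewrite centsC.
have [->|neq] := eqVneq N1 N2; first exact: hab.
have TI : N1 :&: N2 = 1.
  apply/eqP; apply: contraR neq => nt.
  have nI : H \subset 'N(N1 :&: N2).
    by apply: normsI; [case/mingroupP: mN1 => /andP[] | case/mingroupP: mN2 => /andP[]].
  case/mingroupP: mN1 => _ m1; case/mingroupP: mN2 => _ m2.
  have e1 := m1 [group of N1 :&: N2] (introT andP (conj nt nI)) (subsetIl _ _).
  have e2 := m2 [group of N1 :&: N2] (introT andP (conj nt nI)) (subsetIr _ _).
  by apply/eqP/val_inj; rewrite /= -[LHS]e1 -[RHS]e2.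
have nN1 : H \subset 'N(N1) by case/mingroupP: mN1 => /andP[].
have nN2 : H \subset 'N(N2) by case/mingroupP: mN2 => /andP[].
apply/commG1P; apply/eqP; rewrite eqEsubset sub1G andbT -TI.
by apply: commg_subI; rewrite subsetI subxx /= ?(subset_trans sN1) ?(subset_trans sN2).
Qed.


Section Q.
Variables (gT : finGroupType) (G M : {group gT}).
Hypothesis maxM : maximal M G.
Let K := gcore M G.
Let sMG : M \subset G := proper_sub (maxgroupp maxM).
Let nKG : K <| G := gcore_normal sMG.
Let sKM : K \subset M := gcore_sub _ _.
Let nKM : K <| M := normalS sKM sMG nKG.

Lemma q_index : #|G / K : M / K| = #|G : M|.
Proof.
apply: index_quotient_eq => //; first by rewrite subIset // sKM orbT.
by case/andP: nKG.
Qed.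

Lemma q_max : maximal (M / K) (G / K).
Proof. by rewrite quotient_maximal. Qed.

Lemma q_corefree (N : {group coset_of K}) :
  G / K \subset 'N(N) -> N \subset M / K -> N :=: 1.
Proof.
move=> nN sN.
have sNG : N \subset G / K by apply: subset_trans sN (quotientS _ sMG).
have nP : coset K @*^-1 N <| G.
  by rewrite -[X in _ <| X](quotientGK nKG) cosetpre_normal /normal sNG nN.
have sPM : coset K @*^-1 N \subset M by rewrite sub_cosetpre_quo.
have sPK : coset K @*^-1 N \subset K.
  by apply: gcore_max => //; case/andP: nP.
apply/eqP; rewrite eqEsubset sub1G andbT -(cosetpreK N) -(trivg_quotient K).
exact: quotientS.
Qed.

Lemma typeA_index : typeA G M ->
  exists p n, [/\ p \in primes #|G|, 0 < n, n <= #|G| & #|G : M| = expn p n].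
Proof.
move=> hA.
have mq := q_max.
have ltMG : M / K \proper G / K := maxgroupp mq.
have ntG : G / K != 1.
  apply: contraTneq ltMG => ->; apply/negP => /properP[_ [x]].
  by rewrite inE => /eqP -> ; rewrite group1.
have [N minN sNG] := minnormal_exists ntG (normG _).
have /mingroupP[/andP[ntN nNG] _] := minN.
have abN : abelian N.
  apply: abelianS hA; rewrite /socle; apply: sub_gen.
  by apply: (bigcup_sup N); rewrite sNG minN.
have nsNM : ~~ (N \subset M / K).
  by apply: contra ntN => sNM; rewrite (q_corefree nNG sNM).
have sMbG : M / K \subset G / K := proper_sub ltMG.
have nNM : M / K \subset 'N(N) := subset_trans sMbG nNG.
have defG : N * (M / K) = G / K.
  have sJ : N <*> (M / K) \subset G / K by rewrite join_subG sNG.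
  case/maxgroupP: mq => _ mx.
  have [prJ|nprJ] := boolP ((N <*> (M / K))%G \proper G / K).
    have eJ := mx _ prJ (joing_subr _ _).
    by have := joing_subl N (M / K); rewrite eJ (negbTE nsNM).
  rewrite -norm_joinEr //; apply/eqP; rewrite eqEproper sJ /=.
  by rewrite properEneq in nprJ *; move: nprJ; rewrite sJ andbT => /negPn /eqP ->; rewrite eqxx.
have TI : N :&: M / K = 1.
  apply: (@q_corefree [group of N :&: M / K]); last exact: subsetIr.
  rewrite -defG mul_subG //.
    apply: subset_trans (cent_sub _); apply: subset_trans (centS (subsetIl _ _)).
    exact: abN.
  by rewrite normsI // normG.
have cardN : #|G : M| = #|N|.
  rewrite -q_index -divgS //= -defG TI_cardMg // mulnK //.
have [_ _ abelN] := minnormal_solvable minN (subxx _) (abelian_sol abN).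
set p := pdiv #|N| in abelN.
have pN := abelem_pgroup abelN.
have gt1 : 1 < #|N| by rewrite cardG_gt1.
have pr : prime p := pdiv_prime gt1.
have dNG : #|N| %| #|G|.
  apply: dvdn_trans (cardSg sNG) _; rewrite card_quotient; first exact: dvdn_indexg.
  by case/andP: nKG.
have lenG : #|N| <= #|G| by apply: dvdn_leq.
exists p, (logn p #|N|); split.
- rewrite mem_primes pr cardG_gt0 /=; apply: dvdn_trans dNG.
  exact: pdiv_dvd.
- by rewrite logn_gt0 mem_primes pr (ltnW gt1) pdiv_dvd.
- apply: leq_trans lenG; rewrite {2}(card_pgroup pN); apply: ltnW.
  by apply: ltn_expl; apply: prime_gt1.
- by rewrite cardN {1}(card_pgroup pN).
Qed.

Lemma small_primes q : q \in primes #|G / K| -> q <= #|G : M|.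
Proof.
move=> hq; rewrite leqNgt; apply/negP => ltq.
have prq : prime q by move: hq; rewrite mem_primes => /andP[].
have [Q sylQ] := Sylow_exists q G.
have sQG : Q \subset G by case/andP: sylQ.
have sQK : Q \subset K.
  rewrite /K -astabRs_rcosets; apply/subsetP => a Qa; apply/astabP => X HX.
  have so : orbit 'Rs Q X \subset rcosets M G.
    apply/subsetP => Y /imsetP[b Qb ->]; case/imsetP: HX => g Gg ->.
    rewrite /= !rcosetE -rcosetM mem_rcosets; apply: (subsetP (mulG_subr _ _)); rewrite groupM //.
    exact: (subsetP sQG).
  have ho : #|orbit 'Rs Q X| < q.
    by apply: leq_ltn_trans (subset_leq_card so) ltq.
  have qo : q.-nat #|orbit 'Rs Q X|.
    rewrite card_orbit; apply: pnat_dvd (dvdn_indexg _ _) (pHall_pgroup sylQ).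
  have [k ek] := p_natP qo.
  have k0 : k = 0%N.
    case: k ek => // k ek; move: ho; rewrite ek expnS.
    by rewrite ltnNge leq_pmulr // expn_gt0 prime_gt0.
  move: ek; rewrite k0 expn0 => /card_orbit1 eo.
  by have := mem_orbit 'Rs X Qa; rewrite eo => /set1P.
have nq : q^'.-nat #|G : K|.
  apply: pnat_dvd (indexgS G sQK) _; by case/and3P: sylQ.
move: hq; rewrite card_quotient; last by case/andP: nKG.
by move=> hq; have := pnatPpi nq hq; rewrite !inE eqxx.
Qed.

Lemma typeB_index : ~~ typeA G M -> 5 <= #|G : M|.
Proof.
rewrite leqNgt; apply: contraNN => lt5.
apply: socle_abelian => N sN minN.
have solH : solvable (G / K).
  apply: Burnside_p_a_q_b; apply: (@leq_trans (size [:: 2; 3]%N)) => //.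
  apply: uniq_leq_size (primes_uniq _) _ => q hq.
  have le4 : q <= 4 by apply: leq_trans (small_primes hq) _.
  have prq : prime q by move: hq; rewrite mem_primes => /andP[].
  move: le4 prq; case: q {hq} => [|[|[|[|[|q]]]]] //.
have [_ _ ab] := minnormal_solvable minN sN solH.
exact: abelem_abelian ab.
Qed.
End Q.

Lemma card_tuples_in (T : finType) (A : {set T}) k :
  #|[set x : k.-tuple T | all (fun y => y \in A) x]| = expn #|A| k.
Proof.
have -> : [set x : k.-tuple T | all (fun y => y \in A) x] =
          [set [tuple (f : {ffun 'I_k -> T}) i | i < k] | f in ffun_on (mem A)].
  apply/setP => x; rewrite inE; apply/idP/imsetP.
    move=> /all_tnthP hx; exists [ffun i => tnth x i].
      by apply/ffun_onP => i; rewrite ffunE; apply: hx.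
    by apply: eq_from_tnth => i; rewrite tnth_mktuple ffunE.
  case=> f /ffun_onP hf ->; apply/all_tnthP => i; rewrite tnth_mktuple.
  exact: hf.
rewrite card_imset ?card_ffun_on ?card_ord //.
move=> f g efg; apply/ffunP => i.
by rewrite -(tnth_mktuple f) -(tnth_mktuple g) efg.
Qed.

Lemma card_bigcup_le (T I : finType) (P : pred I) (F : I -> {set T}) :
  #|\bigcup_(i | P i) F i| <= \sum_(i | P i) #|F i|.
Proof.
elim/big_rec2: _ => [|i b a _ hab]; first by rewrite cards0. apply: leq_trans (leq_card_setU _ _).1 _.
exact: leq_add.
Qed.

Lemma count_bound gT (G : {group gT}) k :
  (expn #|G| k <= ngen G k + \sum_(M : {group gT} | maximal M G) expn #|M| k)%N.
Proof.
rewrite -card_tuples_in /ngen.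
set Gen := [set x : k.-tuple gT | _ && _].
set In := fun A : {set gT} => [set x : k.-tuple gT | all (fun y => y \in A) x].
have -> : \sum_(M : {group gT} | maximal M G) expn #|M| k =
          \sum_(M : {group gT} | maximal M G) #|In M|.
  by apply: eq_bigr => M _; rewrite card_tuples_in.
have sub : In G \subset Gen :|: \bigcup_(M : {group gT} | maximal M G) In M.
  apply/subsetP => x; rewrite inE => hx.
  have [gx|ngx] := boolP (<<[set y | y \in x]>> == G).
    by rewrite inE; apply/orP; left; rewrite inE hx gx.
  rewrite inE; apply/orP; right.
  have sX : <<[set y | y \in x]>> \subset G.
    rewrite gen_subG; apply/subsetP => y; rewrite inE => yx.
    exact: (allP hx).
  case: (maximal_exists sX) => [eX|[M maxM sXM]].
    by move: ngx; rewrite eX eqxx.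
  apply/bigcupP; exists M => //; rewrite inE; apply/allP => y yx.
  apply: (subsetP sXM); apply: mem_gen; by rewrite inE.
apply: leq_trans (subset_leq_card sub) _.
apply: leq_trans (leq_card_setU _ _).1 _.
by rewrite leq_add2l card_bigcup_le.
Qed.

End GroupPart.

Section RealPart.
Local Open Scope R_scope.
HB.instance Definition _ := Monoid.isComLaw.Build R 0 Rplus
  (fun x y z => esym (Rplus_assoc x y z)) Rplus_comm Rplus_0_l.

Lemma Rsum_le (I : Type) (s : seq I) (P : pred I) (F H : I -> R) :
  (forall i, P i -> F i <= H i) ->
  \big[Rplus/0]_(i <- s | P i) F i <= \big[Rplus/0]_(i <- s | P i) H i.
Proof.
move=> h; apply: (big_ind2 (fun a b => a <= b)) => //; first lra.
by move=> *; apply: Rplus_le_compat.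
Qed.

Lemma Rsum_ge0 (I : Type) (s : seq I) (P : pred I) (F : I -> R) :
  (forall i, P i -> 0 <= F i) -> 0 <= \big[Rplus/0]_(i <- s | P i) F i.
Proof.
move=> h; apply: (big_ind (fun a => 0 <= a)) => //; first lra.
by move=> *; lra.
Qed.

Lemma Rsum_term (I : eqType) (s : seq I) (F : I -> R) j :
  j \in s -> (forall i, 0 <= F i) -> F j <= \big[Rplus/0]_(i <- s) F i.
Proof.
move=> js h; elim: s js => // x s IH; rewrite inE big_cons => /orP[/eqP ->|js].
  have := @Rsum_ge0 _ s xpredT F (fun i _ => h i); lra.
have := IH js; have := h x; lra.
Qed.

Lemma INR_sum (I : Type) (s : seq I) (P : pred I) (F : I -> nat) :
  INR (\sum_(i <- s | P i) F i) = \big[Rplus/0]_(i <- s | P i) INR (F i).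
Proof. by apply: (big_morph INR) => // x y; rewrite plus_INR. Qed.

Lemma Rsum_mulr (I : Type) (s : seq I) (P : pred I) (F : I -> R) c :
  \big[Rplus/0]_(i <- s | P i) F i * c = \big[Rplus/0]_(i <- s | P i) (F i * c).
Proof.
apply: (big_morph (fun x => x * c)) => [x y|]; first by rewrite Rmult_plus_distr_r.
by rewrite Rmult_0_l.
Qed.

Lemma Rsum_cond (I : finType) (P Q : pred I) c :
  \big[Rplus/0]_(i | P i) (if Q i then c else 0) = INR #|[set i | P i && Q i]| * c.
Proof.
rewrite -big_mkcondr /=.
transitivity ((\big[Rplus/0]_(i | P i && Q i) INR 1) * c).
  by rewrite Rsum_mulr; apply: eq_bigr => i _ /=; rewrite Rmult_1_l.
by rewrite -INR_sum sum1_card cardsE.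
Qed.

Lemma INR_expn (p n : nat) : INR (p ^ n)%nat = INR p ^ n.
Proof. exact: pow_INR. Qed.

Lemma inf_sum_ext (f g : nat -> R) l :
  (forall n, f n = g n) -> infinite_sum f l -> infinite_sum g l.
Proof.
move=> e h eps he; have [N hN] := h eps he; exists N => n hn.
have -> : sum_f_R0 g n = sum_f_R0 f n by elim: n {hn} => //= n ->; rewrite e.
exact: hN.
Qed.

Lemma inf_sum_plus f g l1 l2 :
  infinite_sum f l1 -> infinite_sum g l2 ->
  infinite_sum (fun n => f n + g n) (l1 + l2).
Proof.
move=> h1 h2; have := CV_plus _ _ _ _ h1 h2 => h eps he.
have [N hN] := h eps he; exists N => n hn; rewrite sum_plus; exact: hN.
Qed.

Lemma inf_sum_zero : infinite_sum (fun _ => 0) 0.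
Proof.
move=> eps he; exists O => n _.
have -> : sum_f_R0 (fun _ => 0) n = 0 by elim: n => //= n ->; lra.
by rewrite /Rdist Rminus_0_r Rabs_R0.
Qed.

Lemma inf_sum_big (I : eqType) (s : seq I) (F : I -> nat -> R) (L : I -> R) :
  (forall j, j \in s -> infinite_sum (F j) (L j)) ->
  infinite_sum (fun i => \big[Rplus/0]_(j <- s) F j i) (\big[Rplus/0]_(j <- s) L j).
Proof.
elim: s => [|x s IH] h.
  by rewrite big_nil; apply: inf_sum_ext inf_sum_zero => n; rewrite big_nil.
have := inf_sum_plus (h x (mem_head _ _)) (IH (fun j js => h j (@mem_behead _ (x :: s) j js))).
rewrite big_cons; apply: inf_sum_ext => n; by rewrite big_cons.
Qed.

Lemma inf_sum_geom (c x : R) (t : nat) : 1 < x ->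
  infinite_sum (fun i => c / x ^ (t + i)) (c / x ^ t * / (1 - / x)).
Proof.
move=> hx.
have ax : Rabs (/ x) < 1.
  rewrite Rabs_right; last by left; apply: Rinv_0_lt_compat; lra.
  rewrite -Rinv_1; apply: Rinv_lt_contravar; lra.
have := GP_infinite (/ x) ax; rewrite /Pser => hg.
move=> eps he.
have xt : 0 < x ^ t by apply: pow_lt; lra.
set a := c / x ^ t.
have [N hN] : exists N, forall n, (n >= N)%coq_nat ->
    Rdist (sum_f_R0 (fun n => 1 * (/ x) ^ n) n) (/ (1 - / x)) < eps / (Rabs a + 1).
  apply: hg; apply: Rdiv_lt_0_compat => //; have := Rabs_pos a; lra.
exists N => n hn.
have -> : sum_f_R0 (fun i => c / x ^ (t + i)) n = a * sum_f_R0 (fun n => 1 * (/ x) ^ n) n.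
  rewrite scal_sum; apply: sum_eq => i _.
  rewrite /a pow_add pow_inv; field; split; apply: pow_nonzero; lra.
rewrite /Rdist -Rmult_minus_distr_l Rabs_mult.
have := hN n hn; rewrite /Rdist => hd.
have ha := Rabs_pos a.
have : Rabs a * Rabs (sum_f_R0 (fun n => 1 * (/ x) ^ n) n - / (1 - / x))
       <= Rabs a * (eps / (Rabs a + 1)).
  apply: Rmult_le_compat_l => //; lra.
have : Rabs a * (eps / (Rabs a + 1)) < eps.
  apply: (Rmult_lt_reg_r (Rabs a + 1)); first lra.
  field_simplify; [nra| lra].
lra.
Qed.

End RealPart.

Section Main.
Local Open Scope R_scope.

Lemma expnP (m n : nat) : expn m n = Nat.pow m n.
Proof. elim: n => // n IH; rewrite expnS IH. by []. Qed.

Lemma inv_pow_ge0 (x : R) k : 0 <= x -> 0 <= / x ^ k.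
Proof.
move=> hx; have := pow_le x k hx; case/Rle_lt_or_eq_dec => h.
  by left; apply: Rinv_0_lt_compat.
by rewrite -h Rinv_0; lra.
Qed.

Lemma const_cv (c : R) : Un_cv (fun _ => c) c.
Proof. move=> eps he; exists O => n _; rewrite /Rdist Rminus_diag Rabs_R0; lra. Qed.

Lemma sum_mono (S : nat -> R) m n : (forall i, 0 <= S i) -> (m <= n)%nat ->
  sum_f_R0 S m <= sum_f_R0 S n.
Proof.
move=> h; elim: n => [|n IH]; first by rewrite leqn0 => /eqP ->; lra.
rewrite leq_eqVlt => /orP[/eqP ->|]; first lra.
rewrite ltnS => /IH hm /=; have := h n.+1; lra.
Qed.

Lemma partial_shift (e S : nat -> R) (t : nat) :
  (forall n, e n <= 1) -> (forall i, 0 <= S i) -> (forall i, e (t + i)%nat <= S i) ->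
  forall N, sum_f_R0 e N <= INR t + sum_f_R0 S N.
Proof.
move=> e1 S0 eS.
have claim : forall N, sum_f_R0 e N <=
   INR (minn t N.+1) + (if (N < t)%nat then 0 else sum_f_R0 S (N - t)).
  elim=> [|N IH] /=.
    case: t eS => [|t] eS /=.
      by rewrite /minn /= Rplus_0_l; have := eS O; rewrite addn0.
    by rewrite /minn /= Rplus_0_r; have := e1 O.
  have [ltNt|leNt] := ltnP N.+1 t.
    rewrite (ltnW ltNt) in IH.
    have m1 : minn t N.+1 = N.+1 by apply/minn_idPr; rewrite ltnW.
    have m2 : minn t N.+2 = N.+2 by apply/minn_idPr.
    rewrite m1 in IH; rewrite m2 (S_INR N.+1); have := e1 N.+1; lra.
  have [ltN|leN] := ltnP N t.
    rewrite ltN in IH.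
    have et : t = N.+1 by apply/eqP; rewrite eqn_leq leNt ltN.
    rewrite et subnn /= in IH *.
    have -> : minn N.+1 N.+2 = N.+1 by rewrite /minn ltnSn.
    rewrite minnn in IH.
    by have := eS O; rewrite addn0 et; lra.
  rewrite ltnNge leN /= in IH.
  have -> : minn t N.+2 = t by apply/minn_idPl; rewrite ltnW // ltnS leqW.
  have em : minn t N.+1 = t by apply/minn_idPl; rewrite leqW.
  rewrite em in IH.
  rewrite subSn //=.
  have := eS (N - t).+1; rewrite addnS subnKC //; lra.
move=> N; apply: Rle_trans (claim N) _.
have hm : INR (minn t N.+1) <= INR t by apply: le_INR; apply/leP; rewrite geq_minl.
case: (N < t)%nat.
  have := cond_pos_sum S N S0; lra.
have := sum_mono S0 (leq_subr t N); lra.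
Qed.

End Main.

Section Key.
Local Open Scope R_scope.

Lemma inv_ge0 (x : R) : 0 <= x -> 0 <= / x.
Proof. by move=> hx; have := inv_pow_ge0 1 hx; rewrite pow_1. Qed.

Definition RHSM (gT : finGroupType) (G M : {group gT}) (k : nat) : R :=
  \big[Rplus/0]_(n <- index_iota 5 #|G|.+1)
     (if ~~ typeA G M && (#|G : M|%g == n) then / INR n ^ k else 0) +
  \big[Rplus/0]_(p <- primes #|G|) \big[Rplus/0]_(n <- index_iota 1 #|G|.+1)
     (if typeA G M && (#|G : M|%g == (p ^ n)%nat) then / INR p ^ (n * k) else 0).

Lemma pointwise (gT : finGroupType) (G M : {group gT}) (k : nat) :
  maximal M G -> / INR #|G : M|%g ^ k <= RHSM G M k.
Proof.
move=> maxM; rewrite /RHSM.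
have nn1 : forall (b : bool) n, 0 <= (if b then / INR n ^ k else 0).
  by move=> b n; case: b; [apply: inv_pow_ge0; apply: pos_INR | lra].
have nn2 : forall (b : bool) p n, 0 <= (if b then / INR p ^ (n * k) else 0).
  by move=> b p n; case: b; [apply: inv_pow_ge0; apply: pos_INR | lra].
have idxG : (#|G : M|%g <= #|G|)%nat := dvdn_leq (cardG_gt0 G) (dvdn_indexg G M).
case hA: (typeA G M).
- have [p [n [pp n0 nG eidx]]] := typeA_index maxM hA.
  have h1 : 0 <= \big[Rplus/0]_(n <- index_iota 5 #|G|.+1)
     (if ~~ true && (#|G : M|%g == n) then / INR n ^ k else 0).
    by apply: Rsum_ge0 => j _; lra.
  suff h2 : / INR #|G : M|%g ^ k <= \big[Rplus/0]_(p <- primes #|G|)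
      \big[Rplus/0]_(n <- index_iota 1 #|G|.+1)
        (if true && (#|G : M|%g == (p ^ n)%nat) then / INR p ^ (n * k) else 0) by lra.
  apply: Rle_trans (@Rsum_term _ (primes #|G|) (fun p => \big[Rplus/0]_(n <- index_iota 1 #|G|.+1)
        (if true && (#|G : M|%g == (p ^ n)%nat) then / INR p ^ (n * k) else 0)) p pp _).
    apply: Rle_trans (@Rsum_term _ (index_iota 1 #|G|.+1) (fun n =>
        (if true && (#|G : M|%g == (p ^ n)%nat) then / INR p ^ (n * k) else 0)) n _ _).
        rewrite /= eidx expnP eqxx pow_INR -pow_mult; exact: Rle_refl.
      by rewrite mem_index_iota n0 ltnS.
    by move=> j; apply: nn2.
  by move=> q; apply: Rsum_ge0 => j _; apply: nn2.
- have h5 := typeB_index maxM (negbT hA).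
  have h2 : 0 <= \big[Rplus/0]_(p <- primes #|G|)
      \big[Rplus/0]_(n <- index_iota 1 #|G|.+1)
        (if false && (#|G : M|%g == (p ^ n)%nat) then / INR p ^ (n * k) else 0).
    by apply: Rsum_ge0 => q _; apply: Rsum_ge0 => j _; lra.
  suff h1 : / INR #|G : M|%g ^ k <= \big[Rplus/0]_(n <- index_iota 5 #|G|.+1)
     (if ~~ false && (#|G : M|%g == n) then / INR n ^ k else 0) by lra.
  apply: Rle_trans (@Rsum_term _ (index_iota 5 #|G|.+1) (fun n =>
     (if ~~ false && (#|G : M|%g == n) then / INR n ^ k else 0)) #|G : M|%g _ _).
      by rewrite /= eqxx; exact: Rle_refl.
    by rewrite mem_index_iota h5 ltnS.
  by move=> j; apply: nn1.
Qed.

Lemma key_bound (gT : finGroupType) (G : {group gT}) (t i : nat) :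
  e_term G (t + i) <=
  muStar_term G t i + \big[Rplus/0]_(p <- primes #|G|) mup_term G p t i.
Proof.
have g0 : 0 < INR (#|G| ^ (t + i))%nat.
  by apply: lt_0_INR; apply/ltP; rewrite -expnP expn_gt0 cardG_gt0.
set B := \big[Rplus/0]_(M : {group gT} | maximal M G) / INR #|G : M|%g ^ (t + i).
have step1 : e_term G (t + i) <= B.
  have cb := count_bound G (t + i).
  have cbR : INR (#|G| ^ (t + i))%nat <= INR (ngen G (t + i)) +
      \big[Rplus/0]_(M : {group gT} | maximal M G) INR (expn #|M| (t + i)).
    rewrite -INR_sum -plus_INR -expnP; apply: le_INR; apply/leP; exact: cb.
  have BE : B = (\big[Rplus/0]_(M : {group gT} | maximal M G) INR (expn #|M| (t + i)))
                * / INR (#|G| ^ (t + i))%nat.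
    rewrite Rsum_mulr; apply: eq_bigr => M maxM.
    have sMG : M \subset G := proper_sub (maxgroupp maxM).
    have eG : (#|G| ^ (t + i))%nat = (expn #|M| (t + i) * expn #|G : M|%g (t + i))%nat.
      by rewrite -expnP -expnMn Lagrange.
    rewrite eG mult_INR (expnP #|G : M|%g) pow_INR.
    have n1 : INR (expn #|M| (t + i)) <> 0.
      by apply: not_0_INR; apply/eqP; rewrite -lt0n expn_gt0 cardG_gt0.
    have n2 : INR #|G : M|%g ^ (t + i) <> 0.
      by apply: pow_nonzero; apply: not_0_INR; apply/eqP; rewrite -lt0n indexg_gt0.
    by field; split.
  rewrite /e_term /PG BE.
  set Sm := \big[Rplus/0]_(M : {group gT} | maximal M G) INR (expn #|M| (t + i)) in cbR *.
  set g := INR (#|G| ^ (t + i))%nat in g0 cbR *.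
  have h : 1 <= (INR (ngen G (t + i)) + Sm) * / g.
    rewrite -(Rinv_r g); last lra.
    by apply: Rmult_le_compat_r => //; apply: inv_ge0; lra.
  rewrite Rmult_plus_distr_r in h; rewrite /Rdiv; lra.
apply: Rle_trans step1 _.
apply: Rle_trans (@Rsum_le _ _ _ _ (fun M => RHSM G M (t + i)) (fun M hM => pointwise (t + i) hM)) _.
apply: Req_le; rewrite /RHSM big_split /=; congr Rplus.
  rewrite exchange_big /muStar_term; apply: eq_bigr => n _.
  by rewrite Rsum_cond /Rdiv.
rewrite exchange_big; apply: eq_bigr => p _.
rewrite exchange_big /mup_term; apply: eq_bigr => n _.
by rewrite Rsum_cond /Rdiv.
Qed.

End Key.

Local Open Scope R_scope.

Theorem lemma2 (gT : finGroupType) (G : {group gT}) (t : nat) (ht : (0 < t)%nat) :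
  exists (eG muS : R) (muP : nat -> R),
    infinite_sum (e_term G) eG /\
    infinite_sum (muStar_term G t) muS /\
    (forall p : nat, p \in primes #|G| -> infinite_sum (mup_term G p t) (muP p)) /\
    eG <= INR t + muS + \big[Rplus/0]_(p <- primes #|G|) muP p.
Proof.
set muS := \big[Rplus/0]_(n <- index_iota 5 #|G|.+1)
   (INR (mB G n) / INR n ^ t * / (1 - / INR n)).
set muP := fun p : nat => \big[Rplus/0]_(n <- index_iota 1 #|G|.+1)
   (INR (mA G (p ^ n)%nat) / (INR p ^ n) ^ t * / (1 - / (INR p ^ n))).
have hS : infinite_sum (muStar_term G t) muS.
  rewrite /muStar_term /muS; apply: inf_sum_big => n; rewrite mem_index_iota => /andP[h5 _].
  apply: inf_sum_geom; have := lt_INR 1 n; rewrite /=; apply; apply/ltP.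
  by apply: leq_trans h5.
have hP : forall p : nat, p \in primes #|G| -> infinite_sum (mup_term G p t) (muP p).
  move=> p pp; have prp : prime p by move: pp; rewrite mem_primes => /andP[].
  have p1 : 1 < INR p by have := lt_INR 1 p; rewrite /=; apply; apply/ltP; exact: prime_gt1.
  rewrite /mup_term /muP; apply: inf_sum_big => n; rewrite mem_index_iota => /andP[h1 _].
  have x1 : 1 < INR p ^ n by apply: Rlt_pow_R1 => //; apply/ltP.
  apply: (inf_sum_ext _ (@inf_sum_geom (INR (mA G (p ^ n)%nat)) _ t x1)) => i.
  by rewrite -pow_mult.
set L := muS + \big[Rplus/0]_(p <- primes #|G|) muP p.
set Ss := fun i => muStar_term G t i + \big[Rplus/0]_(p <- primes #|G|) mup_term G p t i.
have hSS : infinite_sum Ss L.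
  by apply: inf_sum_plus hS (inf_sum_big hP).
have S0 : forall i, 0 <= Ss i.
  move=> i; rewrite /Ss /muStar_term /mup_term; apply: Rplus_le_le_0_compat.
    apply: Rsum_ge0 => n _; apply: Rmult_le_pos; first exact: pos_INR.
    by apply: inv_pow_ge0; apply: pos_INR.
  apply: Rsum_ge0 => p _; apply: Rsum_ge0 => n _; apply: Rmult_le_pos; first exact: pos_INR.
  by apply: inv_pow_ge0; apply: pos_INR.
have ng : forall n, (ngen G n <= #|G| ^ n)%nat.
  move=> n; rewrite -expnP -card_tuples_in; apply: subset_leq_card.
  by apply/subsetP => x; rewrite !inE => /andP[].
have e0 : forall n, 0 <= e_term G n.
  move=> n; rewrite /e_term /PG.
  have g0 : 0 < INR (#|G| ^ n)%nat.
    by apply: lt_0_INR; apply/ltP; rewrite -expnP expn_gt0 cardG_gt0.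
  have : INR (ngen G n) * / INR (#|G| ^ n)%nat <= 1.
    rewrite -(Rinv_r (INR (#|G| ^ n)%nat)); last lra.
    apply: Rmult_le_compat_r; first by apply: inv_ge0; lra.
    by apply: le_INR; apply/leP; apply: ng.
  rewrite /Rdiv; lra.
have e1 : forall n, e_term G n <= 1.
  move=> n; rewrite /e_term /PG /Rdiv.
  have := Rmult_le_pos _ _ (pos_INR (ngen G n)) (inv_ge0 (pos_INR (#|G| ^ n)%nat)); lra.
have bound : forall N, sum_f_R0 (e_term G) N <= INR t + L.
  move=> N; apply: Rle_trans (partial_shift e1 S0 (fun i => key_bound G t i) N) _.
  have := sum_incr Ss N L hSS S0; lra.
have [eG heG] : {l | Un_cv (sum_f_R0 (e_term G)) l}.
  apply: growing_cv.
    by move=> n /=; have := e0 n.+1; lra.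
  by exists (INR t + L) => x [n ->]; apply: bound.
exists eG, muS, muP; split; first exact: heG.
split; first exact: hS.
split; first exact: hP.
have := Rle_cv_lim bound heG (const_cv (INR t + L)); rewrite /L; lra.
Qed.
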